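(* Let $q=4$ and let $k\ge 1$ be an integer. Let $S_{2k}=x+x^{4}+x^{4^2}+\cdots+x^{4^{2k-1}}\in\mathbb{F}_2[x]$. Then the polynomial \[ g(x)=x+S_{2k}(x)^{q^{2k}}+S_{2k}(x)^{q^k+3} \] is a permutation polynomial of $\mathbb{F}_{q^{3k}}=\mathbb{F}_{4^{3k}}$, i.e. the map $x\mapsto g(x)$ is a bijection of $\mathbb{F}_{4^{3k}}$.
   Context: $\mathbb{F}_m$ denotes the finite field with $m$ elements. A polynomial $f\in\mathbb{F}_m[x]$ is a permutation polynomial (PP) of $\mathbb{F}_m$ if the induced map $\mathbb{F}_m\to\mathbb{F}_m$, $x\mapsto f(x)$, is a bijection. *)

(* Defs.v *)
From HB Require Import structures.
From mathcomp Require Import all_boot all_order all_algebra all_field.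
Set Implicit Arguments. Unset Strict Implicit. Unset Printing Implicit Defensive.
Import GRing.Theory.
Local Open Scope ring_scope.

(* S_{2k} = x + x^4 + x^(4^2) + ... + x^(4^(2k-1)), viewed in F[x]
   (its coefficients lie in the prime field F_2). *)
Definition S_poly (F : fieldType) (k : nat) : {poly F} :=
  \sum_(i < 2 * k) 'X^(4 ^ i)%N.

Definition g_poly (F : fieldType) (k : nat) : {poly F} :=
  'X + S_poly F k ^+ (4 ^ (2 * k))%N + S_poly F k ^+ (4 ^ k + 3)%N.

Definition is_perm_poly (F : finFieldType) (f : {poly F}) : Prop :=
  bijective (fun x : F => f.[x]).

(* Main.v *)
Require Import Defs.
From HB Require Import structures.
From mathcomp Require Import all_boot all_order all_algebra all_field.
From mathcomp Require Import ring.

Set Implicit Arguments. Unset Strict Implicit. Unset Printing Implicit Defensive.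
Import GRing.Theory.

Section Pf.
Local Open Scope ring_scope.
Variable F : finFieldType.
Variable k : nat.
Hypothesis kpos : (0 < k)%N.
Hypothesis cardF : #|F| = (4 ^ (3 * k))%N.

Lemma ch2 : (2%N \in [pchar F]).
Proof.
apply: (@card_finPcharP F 2 (6 * k)) => //.
by rewrite cardF (_ : 4 = 2 ^ 2)%N // -expnM mulnA.
Qed.

Lemma two0 : (2%:R : F) = 0.
Proof. exact: (pcharf0 ch2). Qed.

Lemma frD (n : nat) (u v : F) : (u + v) ^+ (4 ^ n) = u ^+ (4 ^ n) + v ^+ (4 ^ n).
Proof.
apply: exprDn_pchar.
rewrite (eq_pnat _ (pcharf_eq ch2)) pnatX.
by apply/orP; left.
Qed.

Lemma frS (n m : nat) (f : 'I_m -> F) :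
  (\sum_(i < m) f i) ^+ (4 ^ n) = \sum_(i < m) (f i) ^+ (4 ^ n).
Proof.
apply: (big_morph (fun v : F => v ^+ (4 ^ n))).
  by move=> u v; rewrite frD.
by rewrite expr0n expn_eq0.
Qed.

Lemma frC (a b : nat) (v : F) : (v ^+ (4 ^ a)) ^+ (4 ^ b) = v ^+ (4 ^ (a + b)).
Proof. by rewrite -exprM -expnD. Qed.

Lemma fix3 (v : F) : v ^+ (4 ^ (3 * k)) = v.
Proof. by rewrite -cardF expf_card. Qed.

Lemma tele (f : nat -> F) n :
  \sum_(i < n.+1) f i.+1 + \sum_(i < n.+1) f i = f n.+1 + f 0%N.
Proof.
rewrite big_ord_recr big_ord_recl /=.
have -> : \sum_(i < n) f (lift ord0 i) = \sum_(i < n) f i.+1.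
  by apply: eq_bigr => i _; rewrite lift0.
by rewrite [_ + f n.+1]addrC addrACA addrr_pchar2 ?addr0 //; exact: ch2.
Qed.

Definition Sx (x : F) := \sum_(i < 2 * k) x ^+ (4 ^ i).

Lemma lemC (x : F) : x ^+ (4 ^ (2 * k)) + x = (Sx x) ^+ 4 + Sx x.
Proof.
rewrite /Sx (_ : 4 = 4 ^ 1)%N // frS.
have -> : \sum_(i < 2 * k) (x ^+ (4 ^ i)) ^+ (4 ^ 1) = \sum_(i < 2 * k) x ^+ (4 ^ i.+1).
  by apply: eq_bigr => i _; rewrite frC addn1.
have : (0 < 2 * k)%N by rewrite muln_gt0.
case: (2 * k)%N => [//|n] _.
by rewrite (tele (fun i => x ^+ (4 ^ i))) expn0 expr1.
Qed.

Lemma lemK (x : F) :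
  Sx x + (Sx x) ^+ (4 ^ k) + (Sx x) ^+ (4 ^ (2 * k)) = 0.
Proof.
pose t := x + x ^+ (4 ^ k) + x ^+ (4 ^ (2 * k)).
have tQ : t ^+ (4 ^ k) = t.
  rewrite /t !frD !frC (_ : (2 * k + k = 3 * k)%N); last by rewrite mulSn addnC.
  rewrite fix3 (_ : (k + k = 2 * k)%N); last by rewrite mul2n addnn.
  by rewrite addrC addrA.
have -> : Sx x + (Sx x) ^+ (4 ^ k) + (Sx x) ^+ (4 ^ (2 * k))
          = \sum_(i < 2 * k) t ^+ (4 ^ i).
  rewrite /Sx !frS -!big_split /=; apply: eq_bigr => i _.
  by rewrite /t !frD !frC addnC [(2 * k + i)%N]addnC.
rewrite mul2n -addnn big_split_ord /=.
have -> : \sum_(i < k) t ^+ (4 ^ (k + i)) = \sum_(i < k) t ^+ (4 ^ i).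
  by apply: eq_bigr => i _; rewrite -frC tQ.
by apply: addrr_pchar2; exact: ch2.
Qed.

Lemma key_id (a b x xq : F) : xq + x = a ^+ 4 + a ->
  (xq + b + a * (a + b) ^+ 3) + (x + (a + b) + b * a ^+ 3)
  = a * b ^+ 2 * (a + b).
Proof.
move=> H.
have -> : (xq + b + a * (a + b) ^+ 3) + (x + (a + b) + b * a ^+ 3)
        = (xq + x) + b + a * (a + b) ^+ 3 + (a + b) + b * a ^+ 3 by ring.
rewrite H.
have -> : a ^+ 4 + a + b + a * (a + b) ^+ 3 + (a + b) + b * a ^+ 3 =
   a * b ^+ 2 * (a + b) + 2%:R * (a ^+ 4 + a + b + 2%:R * a ^+ 3 * b + a^+2 * b^+2)
  by ring.
by rewrite two0 mul0r addr0.
Qed.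

Definition gx (x : F) := x + (Sx x) ^+ (4 ^ (2 * k)) + (Sx x) ^+ (4 ^ k + 3).

Definition P (y : F) := y * (y ^+ (4 ^ k)) ^+ 2 * y ^+ (4 ^ (2 * k)).



Lemma lemA (x : F) : (gx x) ^+ (4 ^ (2 * k)) + gx x = P (Sx x).
Proof.
set y := Sx x.
have hc : y ^+ (4 ^ (2 * k)) = y + y ^+ (4 ^ k).
  have := lemK x; rewrite -/y => /eqP; rewrite addr_eq0 oppr_pchar2 ?ch2 //.
  by move=> /eqP.
have h1 : (y ^+ (4 ^ (2 * k))) ^+ (4 ^ (2 * k)) = y ^+ (4 ^ k).
  rewrite frC (_ : (2 * k + 2 * k = 3 * k + k)%N); last first.
    by rewrite -mulnDl addnC mulSn.
  by rewrite -frC fix3.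
have h3 : y ^+ (4 ^ k + 3) = y ^+ (4 ^ k) * y ^+ 3 by rewrite exprD.
have h2 : (y ^+ (4 ^ k + 3)) ^+ (4 ^ (2 * k)) = y * (y ^+ (4 ^ (2 * k))) ^+ 3.
  rewrite h3 exprMn frC (_ : (k + 2 * k = 3 * k)%N); last by rewrite mulSn.
  by rewrite fix3 -!exprM mulnC.
rewrite /gx /P !frD -/y h1 h2 h3 hc.
apply: key_id.
by rewrite lemC.
Qed.



Definition N (y : F) := y * y ^+ (4 ^ k) * y ^+ (4 ^ (2 * k)).

Lemma hA (y : F) : (y ^+ (4 ^ k)) ^+ (4 ^ (2 * k)) = y.
Proof. by rewrite frC (_ : (k + 2 * k = 3 * k)%N) ?fix3 // mulSn. Qed.

Lemma hB (y : F) : (y ^+ (4 ^ (2 * k))) ^+ (4 ^ (2 * k)) = y ^+ (4 ^ k).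
Proof.
rewrite frC (_ : (2 * k + 2 * k = 3 * k + k)%N); last first.
  by rewrite -mulnDl addnC mulSn.
by rewrite -frC fix3.
Qed.

Lemma hC (y : F) : (y ^+ (4 ^ (2 * k))) ^+ (4 ^ k) = y.
Proof. by rewrite frC (_ : (2 * k + k = 3 * k)%N) ?fix3 // mulSn addnC. Qed.

Lemma hD (y : F) : (y ^+ (4 ^ k)) ^+ (4 ^ k) = y ^+ (4 ^ (2 * k)).
Proof. by rewrite frC mul2n addnn. Qed.

Lemma NQ (y : F) : (N y) ^+ (4 ^ k) = N y.
Proof. rewrite /N !exprMn hD hC; ring. Qed.

Lemma fixQ2 (u : F) : u ^+ (4 ^ k) = u -> u ^+ (4 ^ (2 * k)) = u.
Proof. by move=> H; rewrite -hD !H. Qed.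

Lemma P2 (y : F) : (P y) ^+ (4 ^ (2 * k)) = y * N y.
Proof. rewrite /P /N !exprMn !hA hB; ring. Qed.

Lemma NM (u v : F) : N (u * v) = N u * N v.
Proof. rewrite /N !exprMn; ring. Qed.

Lemma NN (v : F) : N (v * N v) = (N v) ^+ 4.
Proof.
rewrite NM {2}/N NQ fixQ2; last exact: NQ.
ring.
Qed.

Lemma Nz (v : F) : N v = 0 -> v = 0.
Proof.
move/eqP; rewrite /N !mulf_eq0 !expf_eq0 -orbA => /orP[/eqP //|/orP[]/andP[_ /eqP]//].
Qed.

Lemma Pinj : injective P.
Proof.
move=> y w H.
have H2 : y * N y = w * N w by rewrite -!P2 H.
have E4 : N y ^+ 4 = N w ^+ 4 by rewrite -!NN H2.
have E : N y = N w.
  have : (N y + N w) ^+ (4 ^ 1) = 0 by rewrite frD E4 addrr_pchar2 // ch2.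
  move/eqP; rewrite expf_eq0 => /andP[_ /eqP].
  by move/eqP; rewrite addr_eq0 oppr_pchar2 ?ch2 // => /eqP.
case: (eqVneq (N y) 0) => Hn.
  by rewrite (Nz Hn) (Nz (esym (etrans (esym Hn) E))).
by apply: (mulIf Hn); rewrite {2}E.
Qed.

Lemma gev (v : F) : (g_poly F k).[v] = gx v.
Proof.
rewrite /g_poly !hornerD hornerX !horner_exp /S_poly horner_sum.
rewrite /gx /Sx.
by under eq_bigr do rewrite hornerXn.
Qed.

End Pf.

Theorem theorem1p1 (F : finFieldType) (k : nat) :
  (0 < k)%N -> #|F| = (4 ^ (3 * k))%N -> is_perm_poly (g_poly F k).
Proof.
move=> hk hF; rewrite /is_perm_poly.
apply: injF_bij => x z /=.
rewrite !gev => H.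
have : P k (Sx k x) = P k (Sx k z) by rewrite -!(lemA hk hF) H.
move/(Pinj hF) => HS.
by move: H; rewrite /gx HS => /addIr /addIr.
Qed.
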